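(* Let $G$ be a connected graph of order $n$. Then $\overline{\mathrm{lcs}}(G)=n-1$ if and only if $G$ has a vertex $v$ for which $\chi(G\setminus v)=\chi(G)-1=\deg(v)$.
   Context: All graphs are finite and simple. For a graph $G=(V,E)$ and an integer $k\ge\chi(G)$, a proper $k$-colouring is a map $c:V\to[k]$ with $c(u)\neq c(v)$ for every edge $uv$. A set $S\subseteq V$ is a determining set for $(G,c)$ if there is no proper $k$-colouring $c'\neq c$ of $G$ with $c'(s)=c(s)$ for all $s\in S$. A critical set for $(G,c)$ is an inclusion-minimal determining set. $\mathrm{lcs}(G,c)$ denotes the size of a largest critical set for $(G,c)$, and $\overline{\mathrm{lcs}}(G,k)$ is the maximum of $\mathrm{lcs}(G,c)$ over all proper $k$-colourings $c$ of $G$; $\overline{\mathrm{lcs}}(G)=\overline{\mathrm{lcs}}(G,\chi(G))$. $G\setminus v$ denotes $G$ with vertex $v$ deleted. *)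

(* Defs.v *)
(* A simple graph = symmetric irreflexive relation e on a finType T. *)
From mathcomp Require Import all_boot.
Set Implicit Arguments. Unset Strict Implicit. Unset Printing Implicit Defensive.

Section Graphs.
Variable T : finType.
Variable e : rel T.

Definition proper_col (k : nat) (c : {ffun T -> 'I_k}) : bool :=
  [forall u, forall v, e u v ==> (c u != c v)].

Definition colourable (k : nat) : bool :=
  [exists c : {ffun T -> 'I_k}, proper_col c].

(* chromatic number: least k admitting a proper k-colouring
   (#|T| colours always suffice, so the min is over k <= #|T|) *)
Definition chi : nat :=
  \big[minn/#|T|]_(k < #|T|.+1 | colourable k) k.

Definition deg (v : T) : nat := #|[set u | e v u]|.

Definition connected_graph : Prop := forall x y : T, connect e x y.

Definition determining (k : nat) (c : {ffun T -> 'I_k}) (S : {set T}) : bool :=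
  [forall c' : {ffun T -> 'I_k},
     (proper_col c' && [forall s in S, c' s == c s]) ==> (c' == c)].

Definition critical (k : nat) (c : {ffun T -> 'I_k}) (S : {set T}) : bool :=
  minset (determining c) S.

Definition lcs (k : nat) (c : {ffun T -> 'I_k}) : nat :=
  \max_(S : {set T} | critical c S) #|S|.

Definition lcsbar (k : nat) : nat :=
  \max_(c : {ffun T -> 'I_k} | proper_col c) lcs c.

End Graphs.

Definition del_vertex {T : finType} (e : rel T) (v : T)
  : rel {x : T | x != v} :=
  fun x y => e (val x) (val y).
Arguments del_vertex {T} e v _ _.

(* Main.v *)
Require Import Defs.
From mathcomp Require Import all_boot.
From Stdlib Require Import Classical.
Set Implicit Arguments. Unset Strict Implicit. Unset Printing Implicit Defensive.

Lemma bigmin_le (I : eqType) (r : seq I) (P : pred I) (F : I -> nat) x0 i :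
  i \in r -> P i -> \big[minn/x0]_(j <- r | P j) F j <= F i.
Proof.
elim: r => // a r IH; rewrite inE big_cons => /orP [/eqP <- -> | ir Pi].
  exact: geq_minl.
case: (P a); last exact: IH.
by rewrite geq_min IH ?orbT.
Qed.

Lemma bigmax_witness (I : finType) (P : pred I) (F : I -> nat) i0 :
  P i0 -> exists2 i, P i & \max_(i | P i) F i = F i.
Proof.
move=> Pi0.
have [i Pi ->] := @eq_bigmax_cond I P F (ltac:(by apply/card_gt0P; exists i0)).
by exists i.
Qed.

Section Basic.
Variables (T : finType) (e : rel T).

Lemma properP k (c : {ffun T -> 'I_k}) :
  reflect (forall u v, e u v -> c u != c v) (proper_col e c).
Proof.
apply: (iffP forallP) => [H u v euv | H u].
  by have /forallP/(_ v)/implyP := H u; apply.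
by apply/forallP => v; apply/implyP; apply: H.
Qed.

Lemma colourableP k :
  reflect (exists c : {ffun T -> 'I_k}, proper_col e c) (colourable e k).
Proof. exact: existsP. Qed.

Lemma colourable_S k : colourable e k -> colourable e k.+1.
Proof.
case/colourableP => c /properP Hc; apply/colourableP.
exists [ffun x => widen_ord (leqnSn k) (c x)]; apply/properP => u v euv.
rewrite !ffunE; apply: contra (Hc u v euv) => /eqP H.
by apply/eqP/val_inj; move: H => /(congr1 val).
Qed.

Lemma chi_le_card : chi e <= #|T|.
Proof.
rewrite /chi; apply: (big_ind (fun x => x <= #|T|)) => //.
  by move=> x y Hx _; rewrite geq_min Hx.
by move=> i _; rewrite -ltnS ltn_ord.
Qed.

Lemma chi_le k : colourable e k -> chi e <= k.
Proof.
move=> Hk; case: (leqP k #|T|) => Hkn; last exact: leq_trans chi_le_card (ltnW Hkn).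
rewrite /chi.
apply: (@bigmin_le _ _ _ _ _ (Ordinal (Hkn : k < #|T|.+1))) => //.
exact: mem_index_enum.
Qed.

Hypothesis e_irr : irreflexive e.
Hypothesis e_sym : symmetric e.

Lemma colourable_card : colourable e #|T|.
Proof.
apply/colourableP; exists [ffun x => enum_rank x]; apply/properP => u v euv.
rewrite !ffunE (inj_eq (@enum_rank_inj T)); apply/eqP => uv.
by rewrite uv e_irr in euv.
Qed.

Lemma chi_col : colourable e (chi e).
Proof.
rewrite /chi; apply: (big_ind (colourable e)) => //.
  exact: colourable_card.
by move=> x y Hx Hy; rewrite /minn; case: ifP.
Qed.

Lemma chi_gt0 : 0 < #|T| -> 0 < chi e.
Proof.
case/card_gt0P => x0 _; rewrite lt0n; apply/eqP => H.
have := chi_col; rewrite H => /colourableP [c _].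
by case: (c x0).
Qed.

Lemma avoid k (c : {ffun T -> 'I_k}) a :
  proper_col e c -> (forall x, c x != a) -> colourable e k.-1.
Proof.
case: k c a => [|k] c a; first by case: a.
move=> /properP Hc Ha /=.
have: forall x, exists j : 'I_k, lift a j = c x.
  move=> x; have [j Hj _] := unlift_some (ltac:(by rewrite eq_sym Ha) : a != c x).
  by exists j; rewrite Hj.
case/fin_all_exists => f Hf; apply/colourableP.
exists [ffun x => f x]; apply/properP => u v euv; rewrite !ffunE.
by apply: contra (Hc u v euv); rewrite -(Hf u) -(Hf v) => /eqP ->.
Qed.

Lemma not_col_lt m : m < chi e -> ~~ colourable e m.
Proof. by move=> Hm; apply/negP => /chi_le; rewrite leqNgt Hm. Qed.

Lemma determiningP k (c : {ffun T -> 'I_k}) (S : {set T}) :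
  reflect (forall c', proper_col e c' -> (forall s, s \in S -> c' s = c s) -> c' = c)
    (determining e c S).
Proof.
apply: (iffP forallP) => H c'.
  move=> Hp Hs; apply/eqP; apply: (implyP (H c')); rewrite Hp /=.
  by apply/forallP => s; apply/implyP => /Hs ->.
apply/implyP => /andP [Hp /forallP Hs]; apply/eqP; apply: H => // s Hs'.
by apply/eqP; apply: (implyP (Hs s)).
Qed.

Definition full k (c : {ffun T -> 'I_k}) w :=
  forall b, b != c w -> exists u, e w u /\ c u = b.

Lemma full_forced k (c c' : {ffun T -> 'I_k}) w :
  full c w -> proper_col e c' -> (forall x, x != w -> c' x = c x) -> c' w = c w.
Proof.
move=> Hf /properP Hp Ha; apply/eqP; apply/negPn/negP => Hne.
have [u [ewu Hu]] := Hf _ Hne.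
have uw : u != w by apply/eqP => uw; rewrite uw e_irr in ewu.
by have := Hp _ _ ewu; rewrite (Ha u uw) Hu eqxx.
Qed.

Lemma determining_full k (c : {ffun T -> 'I_k}) w :
  full c w -> determining e c [set~ w].
Proof.
move=> Hf; apply/determiningP => c' Hp Hs; apply/ffunP => x.
have Ha : forall x, x != w -> c' x = c x by move=> y Hy; apply: Hs; rewrite in_setC1.
case: (eqVneq x w) => [->|xw]; last exact: Ha.
exact: full_forced Hf Hp Ha.
Qed.

Lemma full_vertex k (Hk : chi e = k) (c : {ffun T -> 'I_k}) b :
  proper_col e c -> exists w, c w = b /\ full c w.
Proof.
move=> Hc; apply: NNPP => Hn.
have: forall w, exists d : 'I_k, c w = b -> d != b /\ forall u, e w u -> c u != d.
  move=> w; case: (eqVneq (c w) b) => Hw; last by exists b => H; rewrite H eqxx in Hw.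
  apply: NNPP => Hn2; apply: Hn; exists w; split => // b' Hb'.
  apply: NNPP => Hn3; apply: Hn2; exists b' => _; split; first by rewrite -Hw.
  move=> u ewu; apply/eqP => Hu; apply: Hn3; by exists u.
case/fin_all_exists => f Hf.
pose c2 := [ffun x => if c x == b then f x else c x].
have Hc2 : proper_col e c2.
  apply/properP => u v euv; rewrite !ffunE.
  move/properP: Hc => Hc.
  case: (eqVneq (c u) b) => Hu; case: (eqVneq (c v) b) => Hv.
  - by have := Hc _ _ euv; rewrite Hu Hv eqxx.
  - by rewrite eq_sym; apply: (proj2 (Hf u Hu)).
  - by apply: (proj2 (Hf v Hv)); rewrite e_sym.
  - exact: Hc.
have Hav : forall x, c2 x != b.
  move=> x; rewrite ffunE; case: (eqVneq (c x) b) => Hx //.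
  exact: (proj1 (Hf x Hx)).
have := chi_le (avoid Hc2 Hav); rewrite Hk.
move=> H; have H0 : 0 < k by exact: leq_ltn_trans (leq0n _) (ltn_ord b).
by have := leq_ltn_trans H (ltac:(by rewrite ltn_predL) : k.-1 < k); rewrite ltnn.
Qed.
End Basic.


Section Main.
Variables (T : finType) (e : rel T).
Hypotheses (e_irr : irreflexive e) (e_sym : symmetric e).

Lemma lcs_ub k (Hk : chi e = k) (c : {ffun T -> 'I_k}) :
  proper_col e c -> 0 < #|T| -> lcs e c <= #|T| - 1.
Proof.
move=> Hc HT; have /card_gt0P [x0 _] := HT.
apply/bigmax_leqP => S HS.
rewrite subn1 -ltnS prednK //.
rewrite ltn_neqAle max_card andbT; apply/negP => /eqP HST.
have ST : S = setT.
  by apply/eqP; rewrite eqEcard subsetT cardsT /= -HST leqnn.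
have [w [_ Hw]] := full_vertex e_sym Hk (c x0) Hc.
have Hd := determining_full e_irr Hw.
have := minsetinf HS Hd (ltac:(by rewrite ST subsetT)).
by move/setP/(_ w); rewrite ST in_setC1 eqxx in_setT.
Qed.

Lemma lcsbar_ub : 0 < #|T| -> lcsbar e (chi e) <= #|T| - 1.
Proof. move=> HT; apply/bigmax_leqP => c Hc. exact: (@lcs_ub (chi e) (erefl _) c Hc HT). Qed.

Section Ext.
Variable v : T.
Variable m : nat.
Variable d : {ffun {x : T | x != v} -> 'I_m}.
Definition ext : {ffun T -> 'I_m.+1} :=
  [ffun x => if (insub x : option {x : T | x != v}) is Some y
             then widen_ord (leqnSn m) (d y) else ord_max].
Lemma ext_v : ext v = ord_max.
Proof. by rewrite ffunE insubF ?eqxx. Qed.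
Lemma ext_o y : ext (val y) = widen_ord (leqnSn m) (d y).
Proof. by rewrite ffunE valK. Qed.
Lemma ext_o' x (hx : x != v) : ext x = widen_ord (leqnSn m) (d (exist _ x hx)).
Proof. exact: (ext_o (exist _ x hx)). Qed.
Lemma ext_ne x : x != v -> ext x != ord_max.
Proof.
move=> hx; rewrite (ext_o' hx); apply/eqP => /(congr1 val) /= H.
by have := ltn_ord (d (exist _ x hx)); rewrite H ltnn.
Qed.
Lemma ext_proper : proper_col (del_vertex e v) d -> proper_col e ext.
Proof.
move=> /properP Hd; apply/properP => x y exy.
case: (eqVneq x v) => [xv|xv]; case: (eqVneq y v) => [yv|yv].
- by rewrite xv yv e_irr in exy.
- by rewrite xv ext_v eq_sym ext_ne.
- by rewrite yv ext_v ext_ne.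
- rewrite (ext_o' xv) (ext_o' yv).
  apply: contra (Hd (exist _ x xv) (exist _ y yv) exy) => /eqP H.
  by apply/eqP/val_inj; move/(congr1 val): H.
Qed.
End Ext.

Lemma irr_del v : irreflexive (del_vertex e v).
Proof. by move=> x; exact: e_irr. Qed.

Lemma col_ext v m : colourable (del_vertex e v) m -> colourable e m.+1.
Proof. by case/colourableP => d Hd; apply/colourableP; exists (ext d); exact: ext_proper. Qed.


Lemma backward v : 0 < #|T| -> chi (del_vertex e v) = chi e - 1 -> chi e - 1 = deg e v ->
  lcsbar e (chi e) = #|T| - 1.
Proof.
move=> HT Hv Hdeg.
have irr' := @irr_del v.
have /colourableP [d Hd] := chi_col irr'.
move: d Hd Hv.
set m := chi (del_vertex e v) => d Hd Hv.
have Hk : chi e = m.+1 by rewrite Hv subn1 prednK // chi_gt0.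
have Hdm : deg e v = m by rewrite -Hdeg Hk subn1.
apply/eqP; rewrite eqn_leq lcsbar_ub //=.
rewrite Hk.
pose c := ext d.
have Hc : proper_col e c := ext_proper Hd.
have Hce : forall x y, e x y -> c x != c y by apply/properP.
have Hcv : c v = ord_max by exact: ext_v.
have Hcne : forall x, x != v -> c x != ord_max by move=> x; exact: ext_ne.
clearbody c.
have cover : forall j : 'I_m, exists u, e v u /\ c u = widen_ord (leqnSn m) j.
  move=> j; apply: NNPP => Hn.
  pose c2 := [ffun x => if x == v then widen_ord (leqnSn m) j else c x].
  have Hc2 : proper_col e c2.
    apply/properP => x y exy; rewrite !ffunE.
    case: (eqVneq x v) => [xv|xv]; case: (eqVneq y v) => [yv|yv].
    - by rewrite xv yv e_irr in exy.
    - apply/negP => /eqP H; apply: Hn; exists y; split; first by rewrite -xv.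
      by rewrite -H.
    - apply/negP => /eqP H; apply: Hn; exists x; split; last by rewrite H.
      by rewrite e_sym -yv.
    - exact: Hce.
  have Hav : forall x, c2 x != ord_max.
    move=> x; rewrite ffunE; case: (eqVneq x v) => [_|xv]; last exact: Hcne.
    apply/eqP => /(congr1 val) /= H.
    by have := ltn_ord j; rewrite H ltnn.
  by have := chi_le (avoid Hc2 Hav); rewrite Hk ltnn.
have Hfull : full e c v.
  move=> b; rewrite Hcv => hb.
  have hbm : b < m.
    have := ltn_ord b; rewrite ltnS leq_eqVlt => /orP [/eqP H|//].
    by exfalso; move/eqP: hb; apply; apply: val_inj.
  have [u [evu Hu]] := cover (Ordinal hbm).
  by exists u; split => //; rewrite Hu; apply: val_inj.
have Hinj : {in [set u | e v u] &, injective c}.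
  apply/imset_injP; rewrite eqn_leq leq_imset_card /=.
  apply: (@leq_trans m); first exact: eq_leq Hdm.
  have Hwi : injective (widen_ord (leqnSn m)).
    by move=> i j /(congr1 val) /= H; apply: val_inj.
  have Heq := card_imset [set: 'I_m] Hwi; rewrite cardsT card_ord in Heq.
  apply: leq_trans (eq_leq (esym Heq)) _.
  apply: subset_leq_card; apply/subsetP => b /imsetP [j _ ->].
  have [u [evu Hu]] := cover j.
  by apply/imsetP; exists u; rewrite ?inE.
have Hinj' : forall x y, e v x -> e v y -> c x = c y -> x = y.
  by move=> x y hx hy; apply: Hinj; rewrite inE.
have HS : critical e c [set~ v].
  apply/minsetP; split; first exact (determining_full e_irr Hfull).
  move=> B HB HBS; apply/eqP; rewrite eqEsubset HBS /=.
  apply/subsetP => u; rewrite in_setC1 => uv.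
  case: (boolP (u \in B)) => // uB; exfalso.
  pose c' := [ffun x => if x == u then ord_max
                        else if (x == v) && e v u then c u else c x].
  have H2 : forall x y, e x y -> x != u -> y != u -> c' x != c' y.
    move=> x y exy xu yu; rewrite [c' x]ffunE [c' y]ffunE (negbTE xu) (negbTE yu).
    case: (eqVneq x v) => [xv|xv]; case: (eqVneq y v) => [yv|yv].
    - by rewrite xv yv e_irr in exy.
    - rewrite andTb andFb; case: (boolP (e v u)) => evu; last exact: Hce.
      apply/negP => /eqP H; move/eqP: yu; apply.
      by apply: (Hinj' y u) => //; rewrite -xv.
    - rewrite andTb andFb; case: (boolP (e v u)) => evu; last exact: Hce.
      apply/negP => /eqP H; move/eqP: xu; apply.
      by apply: (Hinj' x u) => //; rewrite -yv e_sym.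
    - exact: Hce.
  have H1 : forall y, e u y -> c' u != c' y.
    move=> y euy; rewrite [c' u]ffunE [c' y]ffunE eqxx.
    case: (eqVneq y u) => [yu|yu]; first by rewrite yu e_irr in euy.
    case: (eqVneq y v) => [yv|yv].
      rewrite andTb; rewrite yv e_sym in euy; rewrite euy eq_sym; exact: Hcne.
    by rewrite andFb eq_sym Hcne.
  have Hp : proper_col e c'.
    apply/properP => x y exy.
    case: (eqVneq x u) => [xu|xu]; first by rewrite xu; apply: H1; rewrite -xu.
    case: (eqVneq y u) => [yu|yu]; last exact: H2.
    by rewrite yu eq_sym; apply: H1; rewrite e_sym -yu.
  have /determiningP Heq := HB.
  have : c' = c.
    apply: Heq => // s Hs; rewrite ffunE.
    have su : s != u by apply: contraNneq uB => <-.
    have sv : s != v by have := subsetP HBS s Hs; rewrite in_setC1.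
    by rewrite (negbTE su) (negbTE sv).
  move/ffunP/(_ u); rewrite ffunE eqxx => H.
  by move: (Hcne u uv); rewrite -H eqxx.
apply: (@leq_trans (lcs e c)); last by rewrite /lcsbar; apply: leq_bigmax_cond.
apply: (@leq_trans #|[set~ v]|); last by rewrite /lcs; apply: leq_bigmax_cond.
by rewrite cardsC1 subn1.
Qed.


Lemma forward k (Hk : chi e = k) (c : {ffun T -> 'I_k}) (S : {set T}) :
  0 < #|T| -> proper_col e c -> critical e c S -> #|S| = #|T| - 1 ->
  exists v, chi (del_vertex e v) = k - 1 /\ k - 1 = deg e v.
Proof.
move=> HT Hc HS HSc.
have Hce : forall x y, e x y -> c x != c y by apply/properP.
have /cards1P [w Hw] : #|~: S| == 1.
  have := cardsC S; rewrite HSc => H.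
  by rewrite -(eqn_add2l (#|T| - 1)) H subnK.
have HSw : S = [set~ w] by rewrite -[S]setCK Hw.
rewrite HSw in HS.
have HD : determining e c [set~ w] := minsetp HS.
have HM : forall u, u != w -> exists c' : {ffun T -> 'I_k},
    [/\ proper_col e c', (forall x, x != u -> x != w -> c' x = c x) & c' != c].
  move=> u uw.
  have Hnd : ~~ determining e c ([set~ w] :\ u).
    apply/negP => Hd; have := minsetinf HS Hd (subD1set _ _).
    by move/setP/(_ u); rewrite setD11 in_setC1 uw.
  move: Hnd; rewrite /determining negb_forall => /existsP [c'].
  rewrite negb_imply => /andP [/andP [Hp /forallP Hag] Hne].
  exists c'; split => // x xu xw; apply/eqP; apply: (implyP (Hag x)).
  by rewrite in_setD1 xu in_setC1 xw.
have F1 : full e c w.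
  move=> b hb; apply: NNPP => Hn.
  pose c' := [ffun x => if x == w then b else c x].
  have Hp : proper_col e c'.
    apply/properP => x y exy; rewrite [c' x]ffunE [c' y]ffunE.
    case: (eqVneq x w) => [xw|xw]; case: (eqVneq y w) => [yw|yw].
    - by rewrite xw yw e_irr in exy.
    - apply/negP => /eqP H; apply: Hn; exists y; split; first by rewrite -xw.
      by rewrite -H.
    - apply/negP => /eqP H; apply: Hn; exists x; split; last by rewrite H.
      by rewrite e_sym -yw.
    - exact: Hce.
  have /determiningP Heq := HD.
  have : c' = c.
    apply: Heq => // s Hs; rewrite ffunE.
    by rewrite in_setC1 in Hs; rewrite (negbTE Hs).
  move/ffunP/(_ w); rewrite ffunE eqxx => H.
  by rewrite H eqxx in hb.
have Hinj : forall x y, e w x -> e w y -> c x = c y -> x = y.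
  move=> x y ewx ewy Hxy.
  have [z [Hzb Hzf]] := full_vertex e_sym Hk (c x) Hc.
  have hza : c z != c w by rewrite Hzb eq_sym; exact: Hce w x ewx.
  have zw : z != w by apply: contraNneq hza => ->.
  have [c' [Hp Hag Hne]] := HM z zw.
  have Hp' : forall u v, e u v -> c' u != c' v by apply/properP.
  have Hw' : c' w != c w.
    apply/negP => /eqP Hw'.
    have Hz' : c' z != c z.
      apply: contra Hne => /eqP Hz'; apply/eqP/ffunP => t.
      case: (eqVneq t z) => [->//|tz]; case: (eqVneq t w) => [->//|tw].
      exact: Hag.
    have [t [ezt Ht]] := Hzf _ Hz'.
    case: (eqVneq t w) => [tw|tw].
      by have := Hp' _ _ ezt; rewrite tw Hw' -Ht tw eqxx.
    have tz : t != z by apply/eqP => tz; rewrite tz e_irr in ezt.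
    by have := Hp' _ _ ezt; rewrite (Hag t tz tw) Ht eqxx.
  have [t [ewt Ht]] := F1 _ Hw'.
  have tz : t = z.
    case: (eqVneq t z) => // tz.
    have tw : t != w by apply/eqP => tw; rewrite tw e_irr in ewt.
    by have := Hp' _ _ ewt; rewrite (Hag t tz tw) Ht eqxx.
  have Huniq : forall x', e w x' -> c x' = c x -> x' = z.
    move=> x' ewx' Hx'; case: (eqVneq x' z) => // x'z.
    have x'w : x' != w by apply/eqP => x'w; rewrite x'w e_irr in ewx'.
    by have := Hp' _ _ ewx'; rewrite (Hag x' x'z x'w) Hx' -Hzb -tz Ht eqxx.
  by rewrite (Huniq x ewx erefl) (Huniq y ewy (esym Hxy)).
have Himg : c @: [set u | e w u] = [set~ c w].
  apply/setP => b; rewrite in_setC1; apply/imsetP/idP => [[u]|hb].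
    by rewrite inE => ewu ->; rewrite eq_sym; exact: Hce.
  have [u [ewu Hu]] := F1 _ hb; exists u; rewrite ?inE //.
have Hdeg : deg e w = k - 1.
  rewrite /deg -(card_in_imset (f := c)); last first.
    by move=> x y; rewrite !inE; exact: Hinj.
  by rewrite Himg cardsC1 card_ord subn1.
exists w; split; last by rewrite Hdeg.
have irr' := @irr_del w.
apply/eqP; rewrite eqn_leq; apply/andP; split; last first.
  have /colourableP [d Hd] := chi_col irr'.
  have := chi_le (col_ext (ltac:(apply/colourableP; exists d; exact: Hd))).
  by rewrite Hk leq_subLR add1n.
have : forall x, exists b : 'I_k, x != w -> c x = c w ->
    b != c w /\ forall t, e x t -> c t != b.
  move=> x; case: (eqVneq x w) => [xw|xw]; first by exists (c w).
  case: (eqVneq (c x) (c w)) => [Hxa|Hxa]; last first.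
    by exists (c w) => _ H; rewrite H eqxx in Hxa.
  have [c' [Hp Hag Hne]] := HM x xw.
  have Hp' : forall u v, e u v -> c' u != c' v by apply/properP.
  have Hxw : ~~ e x w by apply/negP => exw; have := Hce _ _ exw; rewrite Hxa eqxx.
  have Hw' : c' w = c w.
    apply/eqP; apply/negPn/negP => Hw'.
    have [t [ewt Ht]] := F1 _ Hw'.
    have tx : t != x.
      by apply/eqP => tx; rewrite tx e_sym in ewt; rewrite ewt in Hxw.
    have tw : t != w by apply/eqP => tw; rewrite tw e_irr in ewt.
    by have := Hp' _ _ ewt; rewrite (Hag t tx tw) Ht eqxx.
  have Hx' : c' x != c x.
    apply: contra Hne => /eqP Hx'; apply/eqP/ffunP => t.
    case: (eqVneq t x) => [->//|tx]; case: (eqVneq t w) => [->//|tw].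
    exact: Hag.
  exists (c' x) => _ _; split; first by rewrite -Hxa.
  move=> t ext.
  have tx : t != x by apply/eqP => tx; rewrite tx e_irr in ext.
  have tw : t != w by apply/eqP => tw; rewrite tw in ext; rewrite ext in Hxw.
  by have := Hp' _ _ ext; rewrite (Hag t tx tw) eq_sym.
case/fin_all_exists => f Hf.
pose cs := [ffun y : {x : T | x != w} =>
              if c (val y) == c w then f (val y) else c (val y)].
have Hcs : proper_col (del_vertex e w) cs.
  apply/properP => y1 y2 ey; rewrite !ffunE.
  have ey' : e (val y1) (val y2) := ey.
  case: (eqVneq (c (val y1)) (c w)) => H1; case: (eqVneq (c (val y2)) (c w)) => H2.
  - by have := Hce _ _ ey'; rewrite H1 H2 eqxx.
  - by rewrite eq_sym; apply: (proj2 (Hf _ (valP y1) H1)).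
  - by apply: (proj2 (Hf _ (valP y2) H2)); rewrite e_sym.
  - exact: Hce.
have Hav : forall y, cs y != c w.
  move=> y; rewrite ffunE; case: (eqVneq (c (val y)) (c w)) => H //.
  exact: (proj1 (Hf _ (valP y) H)).
by have := chi_le (avoid Hcs Hav); rewrite subn1.
Qed.

End Main.

Theorem theorem3 (T : finType) (e : rel T)
  (e_sym : symmetric e) (e_irr : irreflexive e)
  (e_conn : connected_graph e) (T_nonempty : 0 < #|T|) :
  lcsbar e (chi e) = #|T| - 1 <->
  exists v : T, chi (del_vertex e v) = chi e - 1 /\ chi e - 1 = deg e v.
Proof.
split.
  move=> H.
  have /colourableP [c0 Hc0] := chi_col e_irr.
  have [c Hc Hmax] := bigmax_witness (@lcs T e (chi e)) Hc0.
  have Hdet : determining e c setT.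
    by apply/determiningP => c' _ Hs; apply/ffunP => x; apply: Hs; rewrite in_setT.
  have [S0 HS0 _] := minset_exists Hdet.
  have [S HS HSmax] := bigmax_witness (fun S : {set T} => #|S|) HS0.
  apply: (forward e_irr e_sym (erefl (chi e)) T_nonempty Hc HS).
  have E1 : lcs e c = #|S| by rewrite /lcs HSmax.
  have E2 : lcsbar e (chi e) = lcs e c by rewrite /lcsbar Hmax.
  by rewrite -E1 -E2.
by case=> v [H1 H2]; exact: (@backward T e e_irr e_sym v T_nonempty H1 H2).
Qed.
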